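(* Let $(\Sigma,\theta)$ be a Noetherian topological space. The map $S$ sending a topology $\tau$ on $\Sigma^*$ to the topology generated by the sets $\uparrow_{\le^*}(UV)$ for $U,V\in\tau$ and $\uparrow_{\le^*}W$ for $W\in\theta$ is a refinement function over $\Sigma^*$.
   Context: $\Sigma^*$ is the set of finite words; $UV$ is concatenation; one-letter words are identified with letters. $\le$ is the specialisation preorder of $\theta$; Higman's ordering $u\le^* w$ holds iff there is a strictly increasing $h$ from positions of $u$ to positions of $w$ with $u_i\le w_{h(i)}$; $\uparrow_{\le^*}$ denotes upward closure. A space is Noetherian if every subset is compact. A refinement function over a set $X$ is a map from topologies on $X$ to topologies on $X$ that is monotone for inclusion and sends Noetherian topologies to Noetherian topologies. *)

(* Defs.v *)
From Stdlib Require Import List Arith.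
Import ListNotations.

Definition subset {X : Type} := X -> Prop.

(* tau is a topology on X: contains X, closed under binary intersections and
   arbitrary unions (so also contains the empty set, as the empty union). *)
Definition is_topology {X : Type} (tau : (X -> Prop) -> Prop) : Prop :=
  tau (fun _ => True) /\
  (forall U V, tau U -> tau V -> tau (fun x => U x /\ V x)) /\
  (forall F : (X -> Prop) -> Prop, (forall U, F U -> tau U) ->
     tau (fun x => exists U, F U /\ U x)).

Definition generated_topology {X : Type} (B : (X -> Prop) -> Prop)
  : (X -> Prop) -> Prop :=
  fun U => forall tau, is_topology tau -> (forall S, B S -> tau S) -> tau U.

Definition compact_in {X : Type} (tau : (X -> Prop) -> Prop) (A : X -> Prop)
  : Prop :=
  forall F : (X -> Prop) -> Prop, (forall U, F U -> tau U) ->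
    (forall x, A x -> exists U, F U /\ U x) ->
    exists l : list (X -> Prop), (forall U, In U l -> F U) /\
      (forall x, A x -> exists U, In U l /\ U x).

Definition noetherian {X : Type} (tau : (X -> Prop) -> Prop) : Prop :=
  forall A : X -> Prop, compact_in tau A.

Definition refinement_function {X : Type}
  (R : ((X -> Prop) -> Prop) -> ((X -> Prop) -> Prop)) : Prop :=
  (forall tau, is_topology tau -> is_topology (R tau)) /\
  (forall tau1 tau2, is_topology tau1 -> is_topology tau2 ->
     (forall U, tau1 U -> tau2 U) -> forall U, R tau1 U -> R tau2 U) /\
  (forall tau, is_topology tau -> noetherian tau -> noetherian (R tau)).

Definition spec_le {S : Type} (theta : (S -> Prop) -> Prop) (x y : S) : Prop :=
  forall U, theta U -> U x -> U y.

Definition higman {S : Type} (le : S -> S -> Prop) (u w : list S) : Prop :=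
  exists h : nat -> nat,
    (forall i j, i < j -> j < length u -> h i < h j) /\
    (forall i, i < length u -> h i < length w) /\
    (forall i a, nth_error u i = Some a ->
       exists b, nth_error w (h i) = Some b /\ le a b).

Definition up_higman {S : Type} (le : S -> S -> Prop) (A : list S -> Prop)
  : list S -> Prop :=
  fun w => exists u, A u /\ higman le u w.

Definition concat_set {S : Type} (U V : list S -> Prop) : list S -> Prop :=
  fun w => exists u v, U u /\ V v /\ w = u ++ v.

Definition letters {S : Type} (W : S -> Prop) : list S -> Prop :=
  fun w => exists a, W a /\ w = [a].

Definition S_map {S : Type} (theta : (S -> Prop) -> Prop)
  (tau : (list S -> Prop) -> Prop) : (list S -> Prop) -> Prop :=
  generated_topology (fun B =>
    (exists U V, tau U /\ tau V /\
       (forall w, B w <-> up_higman (spec_le theta) (concat_set U V) w)) \/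
    (exists W, theta W /\
       (forall w, B w <-> up_higman (spec_le theta) (letters W) w))).

(* Main.v *)
Require Import Defs.
From Stdlib Require Import List Arith Lia Classical IndefiniteDescription.
Import ListNotations.

Definition infinite (J : nat -> Prop) := forall N, exists b, N <= b /\ J b.

Lemma infinite_mono (J J' : nat -> Prop) : infinite J -> (forall b, J b -> J' b) -> infinite J'.
Proof. intros H Hs N. destruct (H N) as [b [? ?]]. eauto. Qed.

Lemma not_infinite (J : nat -> Prop) : ~ infinite J -> exists N, forall b, N <= b -> ~ J b.
Proof.
  intros H. apply NNPP. intro H2. apply H. intro N.
  apply NNPP. intro H3. apply H2. exists N. intros b Hb Jb. apply H3. eauto.
Qed.

Lemma pigeon {A} (l : list A) (Q : A -> nat -> Prop) : forall (J : nat -> Prop),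
  infinite J -> (forall b, J b -> exists S, In S l /\ Q S b) ->
  exists S, In S l /\ infinite (fun b => J b /\ Q S b).
Proof.
  induction l as [|a l IH]; intros J HJ H.
  - destruct (HJ 0) as [b [_ Jb]]. destruct (H b Jb) as [S [[] _]].
  - destruct (classic (infinite (fun b => J b /\ Q a b))) as [Hi|Hn].
    + exists a. split; [left; reflexivity | exact Hi].
    + destruct (not_infinite _ Hn) as [N HN].
      destruct (IH (fun b => J b /\ N <= b)) as [S [HS Hinf]].
      * intro M. destruct (HJ (max M N)) as [b [Hb Jb]]. exists b. split; [lia|split; auto; lia].
      * intros b [Jb Nb]. destruct (H b Jb) as [S [[<-|HS] HQ]].
        -- exfalso. apply (HN b Nb). auto.
        -- eauto.
      * exists S. split; [right; exact HS|]. eapply infinite_mono; [exact Hinf|].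
        intros b [[? ?] ?]; auto.
Qed.

Lemma choose {A B} (inh : B) (D : A -> Prop) (R : A -> B -> Prop) :
  (forall a, D a -> exists b, R a b) -> exists f : A -> B, forall a, D a -> R a (f a).
Proof.
  intros H.
  assert (H' : forall a, exists b, D a -> R a b).
  { intro a. destruct (classic (D a)) as [Da|Da].
    - destruct (H a Da) as [b Hb]. eauto.
    - exists inh. intro; contradiction. }
  exists (fun a => proj1_sig (constructive_indefinite_description _ (H' a))).
  intros a Da. exact (proj2_sig (constructive_indefinite_description _ (H' a)) Da).
Qed.

Section Extract.
Variables (T : Type) (idx : T -> nat) (P : T -> nat -> Prop) (J0 : nat -> Prop).
Hypothesis HJ0 : infinite J0.
Hypothesis Hstep : forall J, infinite J -> (forall b, J b -> J0 b) ->
  exists t, J (idx t) /\ infinite (fun b => J b /\ idx t < b /\ P t b).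

Definition St := {J : nat -> Prop | infinite J /\ forall b, J b -> J0 b}.
Definition stepT (s : St) : {t : T | proj1_sig s (idx t) /\
   infinite (fun b => proj1_sig s b /\ idx t < b /\ P t b)} :=
  constructive_indefinite_description _
    (Hstep (proj1_sig s) (proj1 (proj2_sig s)) (proj2 (proj2_sig s))).
Definition nextSt (s : St) : St.
Proof.
  exists (fun b => proj1_sig s b /\ idx (proj1_sig (stepT s)) < b /\ P (proj1_sig (stepT s)) b).
  split.
  - exact (proj2 (proj2_sig (stepT s))).
  - intros b [Hb _]. exact (proj2 (proj2_sig s) b Hb).
Defined.
Fixpoint st (n : nat) : St :=
  match n with
  | 0 => exist _ J0 (conj HJ0 (fun b Hb => Hb))
  | S n => nextSt (st n)
  end.
Definition gx (n : nat) : T := proj1_sig (stepT (st n)).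

Lemma st_S n b : proj1_sig (st (S n)) b ->
  proj1_sig (st n) b /\ idx (gx n) < b /\ P (gx n) b.
Proof. simpl. unfold gx. auto. Qed.

Lemma st_mono n k b : proj1_sig (st (n + k)) b -> proj1_sig (st n) b.
Proof.
  revert b. induction k; intros b H.
  - rewrite Nat.add_0_r in H. exact H.
  - rewrite Nat.add_succ_r in H. apply IHk. apply (st_S _ _ H).
Qed.

Lemma extract : exists g : nat -> T, (forall i, J0 (idx (g i))) /\
  (forall i j, i < j -> idx (g i) < idx (g j) /\ P (g i) (idx (g j))).
Proof.
  exists gx. split.
  - intro i. apply (proj2 (proj2_sig (st i))). exact (proj1 (proj2_sig (stepT (st i)))).
  - intros i j Hij.
    assert (Hj : proj1_sig (st j) (idx (gx j))) by exact (proj1 (proj2_sig (stepT (st j)))).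
    assert (Hj' : proj1_sig (st (S i + (j - S i))) (idx (gx j)))
      by (replace (S i + (j - S i)) with j by lia; exact Hj).
    apply st_mono in Hj'. apply st_S in Hj'. destruct Hj' as [_ [H1 H2]]. split; [exact H1|exact H2].
Qed.
End Extract.

Lemma list_bound {X} (F : (X -> Prop) -> Prop) (J : nat -> Prop) (O : nat -> X -> Prop) :
  forall l, (forall U, In U l -> F U) -> (forall U, F U -> exists n, J n /\ U = O n) ->
  exists N, forall U, In U l -> exists n, J n /\ n < N /\ U = O n.
Proof.
  induction l as [|a l IH]; intros Hl HF.
  - exists 0. intros U [].
  - assert (Hl' : forall U, In U l -> F U) by (intros; apply Hl; right; auto).
    destruct (IH Hl' HF) as [N HN].
    destruct (HF a (Hl a (or_introl eq_refl))) as [m [Jm Hm]].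
    exists (max N (S m)). intros U [<-|HU].
    + exists m. split; auto. split; auto. lia.
    + destruct (HN U HU) as [n [? [? ?]]]. exists n. split; auto. split; auto. lia.
Qed.

Lemma G1J {X} (tau : (X -> Prop) -> Prop) (J : nat -> Prop) (p : nat -> X) (O : nat -> X -> Prop) :
  noetherian tau -> infinite J -> (forall n, J n -> tau (O n) /\ O n (p n)) ->
  exists a b, a < b /\ J a /\ J b /\ O a (p b).
Proof.
  intros Hn HJ H.
  destruct (Hn (fun x => exists n, J n /\ x = p n) (fun U => exists n, J n /\ U = O n))
    as [l [Hl Hc]].
  - intros U [n [Jn ->]]. apply H; auto.
  - intros x [n [Jn ->]]. exists (O n). split; eauto. apply H; auto.
  - destruct (list_bound _ J O l Hl (fun U H => H)) as [N HN].
    destruct (HJ N) as [b [Nb Jb]].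
    destruct (Hc (p b) (ex_intro _ b (conj Jb eq_refl))) as [U [HU Ub]].
    destruct (HN U HU) as [a [Ja [aN ->]]].
    exists a, b. repeat split; auto. lia.
Qed.

Lemma G1inf {X} (tau : (X -> Prop) -> Prop) (J : nat -> Prop) (p : nat -> X) (O : nat -> X -> Prop) :
  noetherian tau -> infinite J -> (forall n, J n -> tau (O n) /\ O n (p n)) ->
  exists a, J a /\ infinite (fun b => J b /\ a < b /\ O a (p b)).
Proof.
  intros Hn HJ H. apply NNPP. intro Hno.
  destruct (extract nat (fun a => a) (fun a b => ~ O a (p b)) J HJ) as [g [Hg1 Hg2]].
  - intros J' HJ' Hsub. destruct (HJ' 0) as [a [_ Ja]].
    exists a. split; auto.
    assert (Hni : ~ infinite (fun b => J b /\ a < b /\ O a (p b))).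
    { intro Hi. apply Hno. exists a. split; auto. }
    destruct (not_infinite _ Hni) as [N HN].
    intro M. destruct (HJ' (max M (max N (S a)))) as [b [Hb Jb]].
    exists b. split; [lia|]. split; auto. split; [lia|].
    intro Ob. apply (HN b); [lia|]. split; auto. split; auto. lia.
  - destruct (G1J tau (fun _ => True) (fun i => p (g i)) (fun i => O (g i)) Hn)
      as [i [j [Hij [_ [_ HO]]]]].
    + intro N. exists N. split; auto.
    + intros n _. apply H, Hg1.
    + apply (proj2 (Hg2 i j Hij)). exact HO.
Qed.

Lemma prod_lemma {X} (tau : (X -> Prop) -> Prop) (J : nat -> Prop) (p q : nat -> X)
  (U V : nat -> X -> Prop) :
  noetherian tau -> infinite J ->
  (forall n, J n -> tau (U n) /\ tau (V n) /\ U n (p n) /\ V n (q n)) ->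
  exists a b, a < b /\ J a /\ J b /\ U a (p b) /\ V a (q b).
Proof.
  intros Hn HJ H.
  destruct (extract nat (fun a => a) (fun a b => U a (p b)) J HJ) as [g [Hg1 Hg2]].
  - intros J' HJ' Hsub.
    destruct (G1inf tau J' p U Hn HJ') as [a [Ja Hi]].
    + intros n Jn. destruct (H n (Hsub n Jn)) as [? [? [? ?]]]. auto.
    + exists a. split; auto.
  - destruct (G1J tau (fun _ => True) (fun i => q (g i)) (fun i => V (g i)) Hn)
      as [i [j [Hij [_ [_ HO]]]]].
    + intro N. exists N. split; auto.
    + intros n _. destruct (H (g n) (Hg1 n)) as [? [? [? ?]]]. auto.
    + exists (g i), (g j). destruct (Hg2 i j Hij). repeat split; auto.
Qed.

Definition allin {X} (L : list (X -> Prop)) (x : X) := forall S, In S L -> S x.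

Definition Opens {X} (B : (X -> Prop) -> Prop) (O : X -> Prop) : Prop :=
  forall x, O x -> exists L, (forall S, In S L -> B S) /\ allin L x /\ (forall y, allin L y -> O y).

Lemma Opens_top {X} (B : (X -> Prop) -> Prop) : is_topology (Opens B).
Proof.
  split; [|split].
  - intros x _. exists []. split; [intros S []|]. split; [intros S []|]. auto.
  - intros U V HU HV x [Ux Vx].
    destruct (HU x Ux) as [L1 [B1 [I1 S1]]]. destruct (HV x Vx) as [L2 [B2 [I2 S2]]].
    exists (L1 ++ L2). split; [|split].
    + intros S HS. apply in_app_or in HS. destruct HS; [apply B1|apply B2]; auto.
    + intros S HS. apply in_app_or in HS. destruct HS; [apply I1|apply I2]; auto.
    + intros y Hy. split; [apply S1|apply S2]; intros S HS; apply Hy; apply in_or_app; auto.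
  - intros F HF x [U [FU Ux]].
    destruct (HF U FU x Ux) as [L [BL [IL SL]]].
    exists L. split; auto. split; auto. intros y Hy. exists U. split; auto.
Qed.

Lemma gen_Opens {X} (B : (X -> Prop) -> Prop) U : generated_topology B U -> Opens B U.
Proof.
  intro H. apply H.
  - apply Opens_top.
  - intros S BS x Sx. exists [S]. split; [|split].
    + intros S' [<-|[]]; auto.
    + intros S' [<-|[]]; auto.
    + intros y Hy. apply Hy. left; auto.
Qed.

Lemma gen_top {X} (B : (X -> Prop) -> Prop) : is_topology (generated_topology B).
Proof.
  split; [|split].
  - intros tau Ht _. apply (proj1 Ht).
  - intros U V HU HV tau Ht HB. apply (proj1 (proj2 Ht)); [apply HU|apply HV]; auto.
  - intros F HF tau Ht HB. pose proof Ht as Ht'. destruct Ht' as [_ [_ Hu]]. apply Hu. intros U FU. apply HF; auto.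
Qed.

Definition Bsub {Sigma} (theta : (Sigma -> Prop) -> Prop) (tau : (list Sigma -> Prop) -> Prop)
  : (list Sigma -> Prop) -> Prop := fun B =>
    (exists U V, tau U /\ tau V /\
       (forall w, B w <-> up_higman (spec_le theta) (concat_set U V) w)) \/
    (exists W, theta W /\
       (forall w, B w <-> up_higman (spec_le theta) (letters W) w)).

Lemma no_bad_sub {Sigma} (theta : (Sigma -> Prop) -> Prop) (tau : (list Sigma -> Prop) -> Prop) :
  noetherian theta -> noetherian tau ->
  forall (y : nat -> list Sigma) (T : nat -> list Sigma -> Prop),
  (forall n, Bsub theta tau (T n)) -> (forall n, T n (y n)) ->
  exists a b, a < b /\ T a (y b).
Proof.
  intros Hth Hta y T HB HT.
  destruct (pigeon [true; false]
    (fun c b => if c then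
       (exists U V, tau U /\ tau V /\
         (forall w, T b w <-> up_higman (spec_le theta) (concat_set U V) w))
     else (exists W, theta W /\
         (forall w, T b w <-> up_higman (spec_le theta) (letters W) w)))
    (fun _ => True)) as [c [_ Hinf]].
  - intro N. exists N. auto.
  - intros b _. destruct (HB b) as [H|H].
    + exists true. split; [left; auto|exact H].
    + exists false. split; [right; left; auto|exact H].
  - destruct c.
    + destruct (choose ((fun _ => True) : list Sigma -> Prop, (fun _ => True) : list Sigma -> Prop, @nil Sigma, @nil Sigma)
        (fun b => True /\ exists U V, tau U /\ tau V /\
         (forall w, T b w <-> up_higman (spec_le theta) (concat_set U V) w))
        (fun b r => let '(U, V, u, v) := r in tau U /\ tau V /\
         (forall w, T b w <-> up_higman (spec_le theta) (concat_set U V) w) /\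
         U u /\ V v /\ higman (spec_le theta) (u ++ v) (y b))) as [f Hf].
      * intros b [_ [U [V [tU [tV Hiff]]]]].
        destruct (proj1 (Hiff (y b)) (HT b)) as [w [[u [v [Uu [Vv ->]]]] Hh]].
        exists (U, V, u, v). auto 7.
      * destruct (prod_lemma tau _ (fun b => let '(_, _, u, _) := f b in u)
          (fun b => let '(_, _, _, v) := f b in v)
          (fun b => let '(U, _, _, _) := f b in U)
          (fun b => let '(_, V, _, _) := f b in V) Hta Hinf) as [a [b [ab [Ja [Jb [HU HV]]]]]].
        -- intros n Jn. specialize (Hf n Jn). destruct (f n) as [[[U V] u] v].
           destruct Hf as [? [? [? [? [? ?]]]]]. auto.
        -- exists a, b. split; auto.
           pose proof (Hf a Ja) as Ha. pose proof (Hf b Jb) as Hb.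
           destruct (f a) as [[[Ua Va] ua] va]. destruct (f b) as [[[Ub Vb] ub] vb].
           destruct Ha as [_ [_ [Hia _]]]. destruct Hb as [_ [_ [_ [_ [_ Hh]]]]].
           apply Hia. exists (ub ++ vb). split; auto. exists ub, vb. auto.
    + destruct (Hinf 0) as [b0 [_ [_ [W0 [_ Hi0]]]]].
      destruct (proj1 (Hi0 (y b0)) (HT b0)) as [w0 [[c0 [_ _]] _]].
      destruct (choose ((fun _ => True) : Sigma -> Prop, c0)
        (fun b => True /\ exists W, theta W /\
         (forall w, T b w <-> up_higman (spec_le theta) (letters W) w))
        (fun b r => let '(W, c) := r in theta W /\
         (forall w, T b w <-> up_higman (spec_le theta) (letters W) w) /\
         W c /\ higman (spec_le theta) [c] (y b))) as [f Hf].
      * intros b [_ [W [tW Hiff]]].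
        destruct (proj1 (Hiff (y b)) (HT b)) as [w [[c [Wc ->]] Hh]].
        exists (W, c). auto.
      * destruct (G1J theta _ (fun b => let '(_, c) := f b in c)
          (fun b => let '(W, _) := f b in W) Hth Hinf) as [a [b [ab [Ja [Jb HW]]]]].
        -- intros n Jn. specialize (Hf n Jn). destruct (f n) as [W c].
           destruct Hf as [? [? [? ?]]]. auto.
        -- exists a, b. split; auto.
           pose proof (Hf a Ja) as Ha. pose proof (Hf b Jb) as Hb.
           destruct (f a) as [Wa ca]. destruct (f b) as [Wb cb].
           destruct Ha as [_ [Hia _]]. destruct Hb as [_ [_ [_ Hh]]].
           apply Hia. exists [cb]. split; auto. exists cb. auto.
Qed.

Record Item {X} (A : X -> Prop) (F : (X -> Prop) -> Prop) (Bs : (X -> Prop) -> Prop) := mkItem {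
  ix : X; iU : X -> Prop; iL : list (X -> Prop);
  iA : A ix; iF : F iU; iB : forall S, In S iL -> Bs S;
  iin : allin iL ix; isub : forall y, allin iL y -> iU y }.
Arguments ix {X A F Bs}. Arguments iU {X A F Bs}. Arguments iL {X A F Bs}.
Arguments iB {X A F Bs}. Arguments iin {X A F Bs}. Arguments isub {X A F Bs}.

Lemma noeth_gen {X} (Bs : (X -> Prop) -> Prop) :
  (forall (y : nat -> X) (T : nat -> X -> Prop),
     (forall n, Bs (T n)) -> (forall n, T n (y n)) -> exists a b, a < b /\ T a (y b)) ->
  noetherian (generated_topology Bs).
Proof.
  intros Hbad A F HF Hcov. apply NNPP. intro Hno.
  assert (Hnext : forall l : list (Item A F Bs), exists t : Item A F Bs,
            forall t', In t' l -> ~ iU t' (ix t)).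
  { intro l. apply NNPP. intro Hn. apply Hno. exists (map iU l). split.
    - intros U HU. apply in_map_iff in HU. destruct HU as [t [<- _]]. apply iF.
    - intros x Ax. apply NNPP. intro Hx.
      destruct (Hcov x Ax) as [U [FU Ux]].
      destruct (gen_Opens Bs U (HF U FU) x Ux) as [L [BL [IL SL]]].
      apply Hn. exists (mkItem _ _ _ _ x U L Ax FU BL IL SL).
      intros t' Ht' Hx'. apply Hx. exists (iU t'). split; auto. apply in_map; auto. }
  set (next := fun l => proj1_sig (constructive_indefinite_description _ (Hnext l))).
  assert (Hnx : forall l t', In t' l -> ~ iU t' (ix (next l)))
    by (intros l; exact (proj2_sig (constructive_indefinite_description _ (Hnext l)))).
  set (pref := fix pref n := match n with 0 => [] | S n => pref n ++ [next (pref n)] end).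
  set (item := fun n => next (pref n)).
  assert (Hin : forall n m, n < m -> In (item n) (pref m)).
  { intros n m. induction m; intro Hnm; [lia|].
    simpl. apply in_or_app. destruct (Nat.eq_dec n m) as [->|Hne].
    - right. left. reflexivity.
    - left. apply IHm. lia. }
  assert (Hbadi : forall n m, n < m -> ~ iU (item n) (ix (item m))).
  { intros n m Hnm. apply Hnx. apply Hin; auto. }
  destruct (extract (nat * (X -> Prop)) fst
    (fun t b => In (snd t) (iL (item (fst t))) /\ ~ snd t (ix (item b))) (fun _ => True))
    as [g [_ Hg]].
  - intro N. exists N. auto.
  - intros J HJ _. destruct (HJ 0) as [a [_ Ja]].
    destruct (pigeon (iL (item a)) (fun S b => ~ S (ix (item b))) (fun b => J b /\ a < b))
      as [S [HS Hi]].
    + intro M. destruct (HJ (max M (S a))) as [b [Hb Jb]]. exists b. split; [lia|]. split; auto. lia.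
    + intros b [Jb ab]. apply NNPP. intro Hn.
      apply (Hbadi a b ab). apply isub. intros S HS. apply NNPP. intro HnS. apply Hn. eauto.
    + exists (a, S). simpl. split; auto.
      eapply infinite_mono; [exact Hi|]. intros b [[Jb ab] HnS]. auto.
  - destruct (Hbad (fun i => ix (item (fst (g i)))) (fun i => snd (g i))) as [i [j [ij Hij]]].
    + intro n. destruct (Hg n (S n) (Nat.lt_succ_diag_r n)) as [_ [HS _]].
      apply (iB (item (fst (g n)))). exact HS.
    + intro n. destruct (Hg n (S n) (Nat.lt_succ_diag_r n)) as [_ [HS _]].
      apply (iin (item (fst (g n)))). exact HS.
    + destruct (Hg i j ij) as [_ [_ Hn]]. apply Hn. exact Hij.
Qed.

Theorem mainTheorem11 (Sigma : Type) (theta : (Sigma -> Prop) -> Prop) :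
  is_topology theta -> noetherian theta ->
  refinement_function (S_map theta).
Proof.
  intros Hth Hnth. split; [|split].
  - intros tau _. apply gen_top.
  - intros tau1 tau2 _ _ Hsub U HU tau Ht HB. apply HU; auto.
    intros S HS. apply HB. destruct HS as [[U1 [V1 [? [? ?]]]]|H].
    + left. exists U1, V1. auto.
    + right. exact H.
  - intros tau _ Hn. apply (noeth_gen (Bsub theta tau)).
    apply no_bad_sub; auto.
Qed.
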